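(* Let $R$ be a noetherian ring, $\nu$ a valuation having a center on $R$, $b\in R\setminus\mathrm{supp}(\nu)$ and $a_1,\ldots,a_r\in R$ with $\nu(b)\le\nu(a_i)$ for all $i$, and let $R'=(R/J(b))[a_1/b,\ldots,a_r/b]\subseteq R_b$. Then for every $c'\in R'$ there is $c\in R$ with $\mathrm{ann}_{R'}(c')=\mathrm{ann}_{R'}(c/1)$. Moreover, if $\mathrm{ann}_{R'}(c')$ is a prime ideal of $R'$, then $\mathrm{ann}_R(b^Nc)$ is a prime ideal of $R$ for some $N\in\mathbb N$.
   Context: A valuation on a ring $R$ is a map $\nu:R\to\Gamma\cup\{\infty\}$ ($\Gamma$ an ordered abelian group) with $\nu(ab)=\nu(a)+\nu(b)$, $\nu(a+b)\ge\min\{\nu(a),\nu(b)\}$, $\nu(1)=0$, $\nu(0)=\infty$, whose support $\mathrm{supp}(\nu)=\{a:\nu(a)=\infty\}$ is a minimal prime ideal; $\nu$ has a center on $R$ if $\nu\ge0$ on $R$. For $b\in R$, $J(b)=\bigcup_{i\ge1}\mathrm{ann}_R(b^i)$ is the kernel of $R\to R_b$, so $R/J(b)$ is identified with its image in $R_b$. *)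

(* Defs.v *)
From HB Require Import structures.
From mathcomp Require Import all_boot all_order all_algebra.
Set Implicit Arguments.
Unset Strict Implicit.
Unset Printing Implicit Defensive.
Import GRing.Theory.
Local Open Scope ring_scope.

Section Ideals.
Variable R : comPzRingType.

Definition ideal (I : R -> Prop) : Prop :=
  [/\ I 0, (forall x y, I x -> I y -> I (x + y)) & (forall s x, I x -> I (s * x))].

Definition prime_ideal (I : R -> Prop) : Prop :=
  [/\ ideal I, ~ I 1 & forall x y, I (x * y) -> I x \/ I y].

Definition minimal_prime (I : R -> Prop) : Prop :=
  prime_ideal I /\
  forall P : R -> Prop, prime_ideal P -> (forall x, P x -> I x) -> forall x, I x -> P x.

Definition noetherian : Prop :=
  forall I : nat -> R -> Prop, (forall n, ideal (I n)) ->
    (forall n x, I n x -> I n.+1 x) ->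
    exists N, forall n x, (N <= n)%N -> I n x -> I N x.

Definition ann (c : R) : R -> Prop := fun x => x * c = 0.
End Ideals.

(* Gamma \cup {oo} is modelled as [option G], with [None] = oo. *)
Section Valuations.
Variable G : zmodType.
Variable le : rel G.

Definition ordered_abelian_group : Prop :=
  [/\ reflexive le, transitive le, antisymmetric le, total le &
      forall x y z, le x y -> le (x + z) (y + z)].

Definition ole (x y : option G) : bool :=
  match x, y with
  | _, None => true
  | None, Some _ => false
  | Some u, Some v => le u v
  end.

Definition oadd (x y : option G) : option G :=
  match x, y with
  | Some u, Some v => Some (u + v)
  | _, _ => None
  end.

Definition omin (x y : option G) : option G := if ole x y then x else y.

Variable R : comPzRingType.

Definition supp (nu : R -> option G) : R -> Prop := fun a => nu a = None.

Definition valuation (nu : R -> option G) : Prop :=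
  ordered_abelian_group /\
  [/\ (forall x y, nu (x * y) = oadd (nu x) (nu y)),
      (forall x y, ole (omin (nu x) (nu y)) (nu (x + y))),
      nu 1 = Some 0, nu 0 = None & minimal_prime (supp nu)].

Definition has_center (nu : R -> option G) : Prop :=
  forall x, ole (Some 0) (nu x).
End Valuations.

(* An element x / b^n of R_b is represented by the pair (x, n); two pairs
   represent the same element iff [feq]. *)
Section Localization.
Variable R : comPzRingType.
Variable b : R.

Definition locfrac := (R * nat)%type.

Definition feq (p q : locfrac) : Prop :=
  exists k : nat, b ^+ k * (b ^+ q.2 * p.1 - b ^+ p.2 * q.1) = 0.

Definition fadd (p q : locfrac) : locfrac := (b ^+ q.2 * p.1 + b ^+ p.2 * q.1, (p.2 + q.2)%N).
Definition fmul (p q : locfrac) : locfrac := (p.1 * q.1, (p.2 + q.2)%N).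
Definition fof (x : R) : locfrac := (x, 0%N).

Variable r : nat.
Variable a : 'I_r -> R.

(* R' = (R/J(b))[a_1/b, ..., a_r/b] inside R_b: the smallest subring of R_b
   containing the image of R and the a_i/b. *)
Inductive in_R' : locfrac -> Prop :=
  | inR'_of x : in_R' (fof x)
  | inR'_gen i : in_R' (a i, 1%N)
  | inR'_add p q : in_R' p -> in_R' q -> in_R' (fadd p q)
  | inR'_mul p q : in_R' p -> in_R' q -> in_R' (fmul p q)
  | inR'_eq p q : feq p q -> in_R' p -> in_R' q.

Definition annR' (c' : locfrac) : locfrac -> Prop :=
  fun d => in_R' d /\ feq (fmul d c') (fof 0).

Definition idealR' (P : locfrac -> Prop) : Prop :=
  [/\ (forall d, P d -> in_R' d),
      (forall d e, feq d e -> P d -> P e),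
      P (fof 0),
      (forall d e, P d -> P e -> P (fadd d e)) &
      (forall s d, in_R' s -> P d -> P (fmul s d))].

Definition prime_idealR' (P : locfrac -> Prop) : Prop :=
  [/\ idealR' P, ~ P (fof 1) &
      forall d e, in_R' d -> in_R' e -> P (fmul d e) -> P d \/ P e].
End Localization.

(* Main.v *)
Require Import Defs.
From HB Require Import structures.
From mathcomp Require Import all_boot all_order all_algebra.
From mathcomp Require Import ring.
Import GRing.Theory.
Local Open Scope ring_scope.

Lemma feq0E (R : comPzRingType) (b : R) (d c' : locfrac R) :
  feq b (fmul d c') (fof 0) <-> exists k : nat, b ^+ k * (d.1 * c'.1) = 0.
Proof.
rewrite /feq /fmul /fof /=.
split=> -[k hk]; exists k; move: hk; by rewrite expr0 mul1r mulr0 subr0.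
Qed.

Theorem mainTheorem8 (R : comPzRingType) (G : zmodType) (le : rel G)
    (nu : R -> option G) (b : R) (r : nat) (a : 'I_r -> R) :
  noetherian R ->
  valuation le nu ->
  has_center le nu ->
  ~ supp nu b ->
  (forall i, ole le (nu b) (nu (a i))) ->
  forall c' : locfrac R, in_R' b a c' ->
  exists c : R,
    (forall d, annR' b a c' d <-> annR' b a (fof c) d) /\
    (prime_idealR' b a (annR' b a c') ->
       exists N : nat, prime_ideal (ann (b ^+ N * c))).
Proof.
move=> noeth _ _ _ _ c' _.
exists c'.1; split.
  move=> d; rewrite /annR'; split=> -[h1 h2]; split=> //;
    apply/feq0E; move/feq0E: h2; by [].
move=> [_ n1 pr].
pose I n := ann (b ^+ n * c'.1).
have idI : forall n, ideal (I n).
  move=> n; split; rewrite /I /ann.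
  - by rewrite mul0r.
  - by move=> x y hx hy; rewrite mulrDl hx hy addr0.
  - by move=> s x hx; rewrite -(mulrA s) hx mulr0.
have incI : forall n x, I n x -> I n.+1 x.
  move=> n x; rewrite /I /ann exprS => hx.
  have -> : x * (b * b ^+ n * c'.1) = b * (x * (b ^+ n * c'.1)) by ring.
  by rewrite hx mulr0.
have [N HN] := noeth I idI incI.
have key : forall y, (exists k : nat, b ^+ k * (y * c'.1) = 0) <-> I N y.
  move=> y; split.
    move=> [k hk]; apply: (HN (k + N)%N); first by rewrite leq_addl.
    rewrite /I /ann exprD.
    have -> : y * (b ^+ k * b ^+ N * c'.1) = b ^+ N * (b ^+ k * (y * c'.1)) by ring.
    by rewrite hk mulr0.
  rewrite /I /ann => h; exists N.
  have -> : b ^+ N * (y * c'.1) = y * (b ^+ N * c'.1) by ring.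
  by [].
have memE : forall y, annR' b a c' (fof y) <-> I N y.
  move=> y; rewrite /annR'; split.
    by case=> _ /feq0E /key.
  by move=> /key h; split; [apply: inR'_of | apply/feq0E].
exists N; split; first exact: idI.
  by move/memE.
move=> x y hxy.
have : annR' b a c' (fmul (fof x) (fof y)).
  by apply/memE.
move/pr => /(_ (inR'_of _ _ _) (inR'_of _ _ _)) [h|h]; [left|right]; exact/memE.
Qed.
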